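(* For every $m\ge0$ and $n\ge1$ there is a bijection between $Q_3(m,n)$ and $P_3(-m,n)$.
   Context: Partitions: $\lambda_1\ge\cdots\ge\lambda_\ell>0$, $\ell(\lambda)=\ell$, $\lambda_i=0$ for $i>\ell$, $s(\lambda)$ the smallest part with $s(\emptyset)=+\infty$. Rank $=\lambda_1-\ell$; rank-set $=[-\lambda_1,1-\lambda_2,\dots,\ell-1-\lambda_\ell,\ell,\ell+1,\dots]$. $Q(m,n)$: partitions of $n$ whose rank-set contains $m$; $P(-m,n)$: partitions of $n$ with rank $\ge-m$. $m$-Durfee rectangle symbol $(\alpha,\beta)_{(m+j)\times j}$ of $\lambda$: $j\ge0$ is the largest integer with $\lambda_{m+j}\ge j$; $\alpha$ is the conjugate of $(\lambda_1-j,\dots,\lambda_{m+j}-j)$ and $\beta=(\lambda_{m+j+1},\lambda_{m+j+2},\dots)$; $|\lambda|=|\alpha|+|\beta|+j(m+j)$. $Q_3(m,n)$ is the set of $\lambda\in Q(m,n)$ whose symbol has $j\ge1$, $\ell(\beta)-\ell(\alpha)\ge1$, $\alpha_1=m+j$ and $s(\beta)=1$. $P_3(-m,n)$ is the set of $\mu\in P(-m,n)$ whose symbol $(\gamma,\delta)_{(m+j')\times j'}$ has $j'\ge2$ and $\delta_1\le j'-2$. *)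

(* Defs.v *)
(* Integer partitions represented as seq nat (weakly
   decreasing, positive parts); lambda_i (1-indexed) = nth 0 l (i-1),
   so lambda_i = 0 for i > ell. *)
From mathcomp Require Import all_boot all_order all_algebra.
Set Implicit Arguments. Unset Strict Implicit. Unset Printing Implicit Defensive.
Import GRing.Theory Num.Theory.

Definition part (l : seq nat) (i : nat) : nat :=
  if i is i'.+1 then nth 0 l i' else 0.

Definition is_partition (l : seq nat) : bool :=
  sorted geq l && all (fun x => 0 < x) l.

Definition partition_of (n : nat) (l : seq nat) : bool :=
  is_partition l && (sumn l == n).

Definition rank (l : seq nat) : int := (Posz (part l 1) - Posz (size l))%R.

Definition in_rankset (l : seq nat) (x : int) : Prop :=
  (exists2 i, (1 <= i <= size l)%N & x = (Posz (i.-1) - Posz (part l i))%R)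
  \/ ((Posz (size l)) <= x)%R.

Definition Qset (m n : nat) (l : seq nat) : Prop :=
  partition_of n l /\ in_rankset l (Posz m).

Definition Pset (m n : nat) (l : seq nat) : Prop :=
  partition_of n l /\ (- (Posz m) <= rank l)%R.

(* conjugate of a (finite) sequence of naturals: k-th part (1-indexed) is
   the number of entries >= k *)
Definition conj (s : seq nat) : seq nat :=
  mkseq (fun k => count (fun x => k < x) s) (foldr maxn 0 s).

(* m-Durfee rectangle: j = largest j >= 0 with lambda_{m+j} >= j
   (j = 0 always qualifies; any j >= 1 that qualifies has m+j <= ell,
   so j <= ell, hence the bounded max is the true max). *)
Definition durfee_ok (m : nat) (l : seq nat) (j : nat) : bool :=
  (j == 0) || (j <= part l (m + j)).

Definition durfee_j (m : nat) (l : seq nat) : nat :=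
  \max_(j < (size l).+1 | durfee_ok m l j) (j : nat).

Definition durfee_alpha (m : nat) (l : seq nat) : seq nat :=
  let j := durfee_j m l in
  conj [seq part l i - j | i <- iota 1 (m + j)].

Definition durfee_beta (m : nat) (l : seq nat) : seq nat :=
  drop (m + durfee_j m l) l.

(* smallest part; None encodes s(empty) = +infinity *)
Definition spart (l : seq nat) : option nat :=
  if l is x :: t then Some (foldr minn x t) else None.

Definition Q3 (m n : nat) (l : seq nat) : Prop :=
  Qset m n l /\
  let j := durfee_j m l in
  let a := durfee_alpha m l in
  let b := durfee_beta m l in
  [/\ (1 <= j)%N, (1 <= (Posz (size b)) - (Posz (size a)))%R,
      part a 1 = (m + j)%N & spart b = Some 1%N].

Definition P3 (m n : nat) (mu : seq nat) : Prop :=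
  Pset m n mu /\
  let j' := durfee_j m mu in
  let d := durfee_beta m mu in
  (2 <= j')%N /\ (part d 1 <= j' - 2)%N.

(* Main.v *)
Require Import Defs.
From mathcomp Require Import all_boot all_order all_algebra.
From mathcomp Require Import zify.
Set Implicit Arguments. Unset Strict Implicit.

Lemma geq_trans : transitive geq.
Proof. by move=> a b c /= h1 h2; apply: leq_trans h2 h1. Qed.

Lemma nth_anti (l : seq nat) i k : sorted geq l -> i <= k -> nth 0 l k <= nth 0 l i.
Proof.
move=> s ik; case: (ltnP k (size l)) => hk; last by rewrite nth_default.
have := @sorted_leq_nth _ geq geq_trans (fun x => leqnn x) 0 l s i k.
by apply => //; rewrite inE; lia.
Qed.

Lemma part_anti l a b : sorted geq l -> 0 < a <= b -> part l b <= part l a.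
Proof. by case: a => // a; case: b => // b s /= h; apply: nth_anti. Qed.

Lemma dj_ok m l : durfee_ok m l (durfee_j m l).
Proof.
rewrite /durfee_j (bigmax_eq_arg (ord0 : 'I_(size l).+1)) //.
by case: arg_maxnP.
Qed.

Lemma dj_max m l k : durfee_ok m l k -> k <= durfee_j m l.
Proof.
case/orP=> [/eqP -> //| h].
have hk : k < (size l).+1.
  case: k h => // k; rewrite addnS /= => h.
  have : nth 0 l (m + k) != 0 by lia.
  move=> hn; have : m + k < size l by apply: contraNT hn => hh; rewrite nth_default // leqNgt.
  lia.
have := @leq_bigmax_cond _ (fun j : 'I_(size l).+1 => durfee_ok m l j) (fun j => nat_of_ord j) (Ordinal hk).
by apply; rewrite /durfee_ok h orbT.
Qed.

Lemma dj_eq m l j : is_partition l -> durfee_ok m l j -> part l (m + j).+1 <= j ->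
  durfee_j m l = j.
Proof.
move=> /andP[s _] ok hj; apply/eqP; rewrite eqn_leq dj_max // andbT.
rewrite leqNgt; apply/negP => lt.
have := dj_ok m l; rewrite /durfee_ok; case/orP => [/eqP e| h]; first lia.
have := part_anti (a := (m+j).+1) (b := m + durfee_j m l) s.
have hh : 0 < (m+j).+1 <= m + durfee_j m l by lia.
move=> /(_ hh); lia.
Qed.

Lemma fmax_le b s : all (fun x => x <= b) s -> foldr maxn 0 s <= b.
Proof. by elim: s => //= x s IH /andP[h1 h2]; rewrite geq_max h1 IH. Qed.

Lemma fmin_mem x t : foldr minn x t \in x :: t.
Proof.
elim: t => [|y t IH] /=; first by rewrite inE.
rewrite /minn; case: ltnP => h; first by rewrite !inE eqxx orbT.
move: IH; rewrite !inE => /orP[->//|->]; by rewrite !orbT.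
Qed.

Lemma fmin_le x t y : y \in t -> foldr minn x t <= y.
Proof.
elim: t => //= z t IH; rewrite inE => /orP[/eqP->|/IH h]; first by rewrite geq_minl.
by apply: leq_trans h; rewrite geq_minr.
Qed.

Lemma fmin_ge b x t : b <= x -> all (leq b) t -> b <= foldr minn x t.
Proof. by move=> hx; elim: t => //= y t IH /andP[h1 /IH h2]; rewrite leq_min h1 h2. Qed.

Lemma conj_size s : size (conj s) = foldr maxn 0 s.
Proof. by rewrite /conj size_mkseq. Qed.

Lemma conj_part1 s : 0 < foldr maxn 0 s -> part (conj s) 1 = count (fun x => 0 < x) s.
Proof. by move=> h; rewrite /= /conj nth_mkseq. Qed.

Lemma mem_le_head l x : sorted geq l -> x \in l -> x <= part l 1.
Proof.
case: l => //= h t; rewrite path_sortedE; last exact: geq_trans.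
case/andP=> /allP a _; rewrite inE => /orP[/eqP->//|/a]; done.
Qed.

Lemma take_ge l k x : sorted geq l -> x \in take k l -> nth 0 l k.-1 <= x.
Proof.
move=> s hx; have hi := index_mem x (take k l); rewrite hx in hi.
rewrite -(nth_index 0 hx) nth_take; last by move: hi; rewrite size_take; case: ifP => c h //; lia.
apply: nth_anti => //; move: hi; rewrite size_take; case: ifP => c h; lia.
Qed.

Lemma drop_le l k x : sorted geq l -> x \in drop k l -> x <= nth 0 l k.
Proof.
move=> s hx; rewrite -(nth_index 0 hx) nth_drop; apply: nth_anti => //; lia.
Qed.

Lemma sumn_succ d : sumn (map succn d) = sumn d + size d.
Proof. by elim: d => //= x d ->; lia. Qed.

Lemma decomp r : sorted geq r -> all (fun x => 0 < x) r ->
  r = map succn [seq x.-1 | x <- r & 1 < x] ++ nseq (count (pred1 1) r) 1.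
Proof.
elim: r => //= x t IH; rewrite path_sortedE; last exact: geq_trans.
case/andP=> /allP hle st /andP[x0 pt].
have {}IH := IH st pt.
case: (ltnP 1 x) => hx /=.
  rewrite {1}IH; have -> : x == 1 = false by lia.
  by rewrite /= add0n prednK //; lia.
have x1 : x = 1 by lia.
subst x; rewrite eqxx /=.
have hf : [seq y <- t | 1 < y] = [::].
  rewrite (@eq_in_filter _ _ pred0); first exact: filter_pred0.
  by move=> y /hle /=; case: y => [|[|y]].
by rewrite hf /= in IH *; rewrite {1}IH.
Qed.

Definition Qc m n l j := partition_of n l /\ [/\ 0 < j, j < part l (m + j),
  part l (m + j).+1 = j, 1 \in drop (m + j).+1 l & part l 1 + m < size l].

Lemma Q3_Qc m n l : Q3 m n l -> Qc m n l (durfee_j m l).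
Proof.
case=> [[pl rk]]; rewrite /durfee_alpha /durfee_beta.
set j := durfee_j m l; set s := [seq _ | i <- _].
case=> hj1 hsz ha hb.
have pl' := pl; case/andP: pl' => /andP[st pos] /eqP sn.
have ok : j <= part l (m + j).
  by have := dj_ok m l; rewrite -/j /durfee_ok; case/orP => // /eqP; lia.
have nok : part l (m + j).+1 <= j.
  rewrite leqNgt; apply/negP => h.
  have : durfee_ok m l j.+1 by rewrite /durfee_ok addnS h orbT.
  by move/dj_max; rewrite -/j; lia.
have fm : part l 1 - j <= foldr maxn 0 s.
  rewrite /s; have h : m + j = (m + j).-1.+1 by lia.
  by rewrite h /= leq_maxl.
have fpos : 0 < foldr maxn 0 s.
  case: (posnP (foldr maxn 0 s)) => // h.
  by move: ha; rewrite /conj h /=; lia.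
rewrite conj_part1 // in ha.
have hall : all (fun x => 0 < x) s by rewrite all_count ha /s size_map size_iota.
have hgt : j < part l (m + j).
  have := all_nthP 0 hall (m + j).-1; rewrite /s size_map size_iota.
  have hh : (m + j).-1 < m + j by lia.
  move=> /(_ hh); rewrite (nth_map 0); last by rewrite size_iota.
  by rewrite nth_iota // add1n prednK; lia.
rewrite conj_size size_drop in hsz.
have hsz' : part l 1 + m < size l by lia.
have hp1 : part l 1 >= part l (m + j) by apply: part_anti => //; lia.
have hpos : forall k, k < size l -> 0 < nth 0 l k.
  by move=> k hk; apply: (allP pos); rewrite mem_nth.
have hbj : part l (m + j).+1 = j.
  case: rk => [[i /andP[i1 i2] e]|e]; last lia.
  have ip : i.-1 = i - 1 by rewrite subn1.
  rewrite ip in e.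
  case: (ltnP (m + j) i) => hi.
    case: (ltnP (m + j).+1 i) => hi2; last first.
      have ei : i = (m + j).+1 by lia.
      subst i; move: e; lia.
    have hh : 0 < (m + j).+1 <= i by lia.
    have := part_anti st hh; lia.
  have hh : 0 < i <= m + j by lia.
  have := part_anti st hh; lia.
split => //; split => //.
have hd : drop (m + j) l = j :: drop (m + j).+1 l.
  rewrite (drop_nth 0); last lia.
  by move: hbj => /= ->.
move: hb; rewrite hd /= => -[e].
have := fmin_mem j (drop (m + j).+1 l); rewrite e inE => /orP[/eqP j1|//].
have hsz2 : (m + j).+1 < size l by lia.
rewrite (drop_nth 0 hsz2) inE; apply/orP; left.
have := nth_anti (i := (m + j)) (k := (m + j).+1) st; have := hpos _ hsz2.
move: hbj; rewrite /= => hbj; rewrite hbj -j1; lia.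
Qed.

Lemma Qc_dj m n l j : Qc m n l j -> durfee_j m l = j.
Proof.
case=> pl [j0 hgt hbj h1 hs]; case/andP: pl => pl _.
apply: dj_eq => //; first by rewrite /durfee_ok ltnW ?orbT.
by rewrite hbj.
Qed.

Lemma Qc_Q3 m n l j : Qc m n l j -> Q3 m n l.
Proof.
move=> q; have dj := Qc_dj q; case: q => pl [j0 hgt hbj h1 hs].
have pl' := pl; case/andP: pl' => /andP[st pos] /eqP sn.
have hp1 : part l (m + j) <= part l 1 by apply: part_anti => //; lia.
split.
  split => //; left; exists (m + j).+1; first lia.
  by rewrite hbj /=; lia.
rewrite /durfee_alpha /durfee_beta dj.
set s := [seq _ | i <- _].
have fm : part l 1 - j <= foldr maxn 0 s.
  rewrite /s; have h : m + j = (m + j).-1.+1 by lia.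
  by rewrite h /= leq_maxl.
have fle : foldr maxn 0 s <= part l 1 - j.
  apply: fmax_le; apply/allP => x /mapP [i]; rewrite mem_iota => hi ->.
  have hh : 0 < 1 <= i by lia.
  have := part_anti st hh; lia.
have hall : all (fun x => 0 < x) s.
  apply/allP => x /mapP [i]; rewrite mem_iota => hi ->.
  have hh : 0 < i <= m + j by lia.
  have := part_anti st hh; lia.
split => //.
- rewrite conj_size size_drop; lia.
- rewrite conj_part1; last lia.
  by move: hall; rewrite all_count => /eqP ->; rewrite /s size_map size_iota.
- have hd : drop (m + j) l = j :: drop (m + j).+1 l.
    rewrite (drop_nth 0); last lia.
    by move: hbj => /= ->.
  rewrite hd /=; congr Some; apply/eqP; rewrite eqn_leq fmin_le //=.
  apply: fmin_ge => //; apply/allP => x hx.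
  by apply: (allP pos); apply: mem_drop hx.
Qed.

Definition Pc m n mu j := partition_of n mu /\ [/\ 1 < j, j <= part mu (m + j),
  part mu (m + j).+1 <= j - 2 & size mu <= part mu 1 + m].

Lemma P3_Pc m n mu : P3 m n mu -> Pc m n mu (durfee_j m mu).
Proof.
case=> [[pl rk]]; rewrite /durfee_beta; set j := durfee_j m mu.
case=> j2 hd; split => //; split => //.
- by have := dj_ok m mu; rewrite -/j /durfee_ok; case/orP => // /eqP; lia.
- by move: hd; rewrite /= nth_drop addn0.
- by move: rk; rewrite /rank; lia.
Qed.

Lemma Pc_dj m n mu j : Pc m n mu j -> durfee_j m mu = j.
Proof.
case=> pl [j2 ok hb hs]; case/andP: pl => pl _.
apply: dj_eq => //; first by rewrite /durfee_ok ok orbT.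
lia.
Qed.

Lemma Pc_P3 m n mu j : Pc m n mu j -> P3 m n mu.
Proof.
move=> q; have dj := Pc_dj q; case: q => pl [j2 ok hb hs].
split; first by split => //; rewrite /rank; lia.
by rewrite /durfee_beta dj /= nth_drop addn0.
Qed.

Lemma sorted_cat_geq (s1 s2 : seq nat) : sorted geq s1 -> sorted geq s2 ->
  (forall y z, y \in s1 -> z \in s2 -> z <= y) -> sorted geq (s1 ++ s2).
Proof.
move=> h1 h2 h; rewrite (sorted_pairwise geq_trans) pairwise_cat.
rewrite -!(sorted_pairwise geq_trans) h1 h2 !andbT.
by apply/allrelP => y z; apply: h.
Qed.

Lemma sorted_cons_geq x (s : seq nat) : sorted geq s -> (forall z, z \in s -> z <= x) ->
  sorted geq (x :: s).
Proof.
move=> st h; rewrite /= path_sortedE; last exact: geq_trans.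
by rewrite st andbT; apply/allP => z /h.
Qed.

Lemma sorted_nseq1 k : sorted geq (nseq k 1).
Proof. by elim: k => // [[|k]] //= ->; rewrite andbT. Qed.

Lemma filt_succ d k : all (fun x => 0 < x) d ->
  [seq x.-1 | x <- map succn d ++ nseq k 1 & 1 < x] = d.
Proof.
elim: d => [_|x d IH /andP[x0 /IH {}IH]] /=.
  by elim: k.
by rewrite ltnS x0 /= IH.
Qed.

Definition F m j (l : seq nat) :=
  (size l - m.+1) :: take (m + j) l ++ [seq x.-1 | x <- drop (m + j).+1 l & 1 < x].

Definition G m j' (mu : seq nat) :=
  take (m + j'.-1) (behead mu) ++ j'.-1 :: map succn (drop (m + j') mu) ++
  nseq (head 0 mu - j' - size (drop (m + j') mu)).+1 1.

Lemma F_Pc m n l j : Qc m n l j -> Pc m n (F m j l) j.+1.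
Proof.
case=> pl [j0 hgt hbj h1 hs].
have pl' := pl; case/andP: pl' => /andP[st pos] /eqP sn.
set p := take (m + j) l; set r := drop (m + j).+1 l.
set d := [seq x.-1 | x <- r & 1 < x]; set c := count (pred1 1) r.
have hp1 : part l (m + j) <= part l 1 by apply: part_anti => //; lia.
have szl : (m + j).+1 < size l by lia.
have hl : l = p ++ j :: r.
  rewrite -{1}(cat_take_drop (m + j) l) (drop_nth 0); last lia.
  by move: hbj => /= ->.
have str : sorted geq r by apply: drop_sorted.
have posr : all (fun x => 0 < x) r by apply/allP => x hx; apply: (allP pos); apply: mem_drop hx.
have hr := decomp str posr; rewrite -/d -/c in hr.
have c1 : 0 < c by rewrite /c -has_count has_pred1.
have szp : size p = m + j by rewrite size_takel //; lia.
have szeq : size l = m + j + 1 + size d + c.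
  by rewrite {1}hl size_cat /= hr size_cat size_map size_nseq szp; lia.
have sumeq : sumn l = sumn p + j + sumn d + size d + c.
  by rewrite {1}hl sumn_cat /= hr sumn_cat sumn_succ sumn_nseq; lia.
have dlt : forall z, z \in d -> z < j.
  move=> z /mapP[y]; rewrite mem_filter => /andP[y1 yr] ->.
  have := drop_le st yr; have := nth_anti (i := m + j) (k := (m + j).+1) st (leqnSn _).
  move: hbj => /= ->; lia.
have dpos : forall z, z \in d -> 0 < z.
  by move=> z /mapP[y]; rewrite mem_filter => /andP[y1 yr] ->; lia.
have pgt : forall y, y \in p -> j < y.
  move=> y hy; have := take_ge st hy; move: hgt.
  have -> : m + j = (m + j).-1.+1 by lia.
  by rewrite /=; lia.
have ple : forall y, y \in p -> y <= part l 1.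
  by move=> y hy; apply: mem_le_head => //; apply: mem_take hy.
have dsort : sorted geq d.
  rewrite /d; apply: (homo_sorted (e := geq)); first by move=> x y /=; lia.
  exact: sorted_filter geq_trans _ _ str.
split.
  rewrite /partition_of /F /is_partition -/p -/r -/d; apply/andP; split; last first.
    by rewrite /= sumn_cat; apply/eqP; lia.
  apply/andP; split.
    apply: sorted_cons_geq.
      apply: sorted_cat_geq => //; first exact: take_sorted.
      by move=> y z /pgt hy /dlt hz; lia.
    move=> z; rewrite mem_cat => /orP[/ple|/dlt]; lia.
  rewrite /= all_cat; apply/andP; split; first lia.
  apply/andP; split; apply/allP => z hz; last exact: dpos.
  by apply: (allP pos); apply: mem_take hz.
rewrite /F -/p -/r -/d; split; first lia.
- have e2 : m + j = (m + j).-1.+1 by rewrite prednK //; lia.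
  have e : part l (m + j) = nth 0 l (m + j).-1 by rewrite {1}e2.
  rewrite addnS {1}e2 /= nth_cat szp ltn_predL ifT; last lia.
  rewrite nth_take; last by rewrite ltn_predL; lia.
  by rewrite -e.
- rewrite addnS /= nth_cat szp ltnn subnn.
  by case: d dlt {dsort dpos hr szeq sumeq} => [|z dd] //= h; have := h z (mem_head _ _); lia.
- rewrite /= size_cat szp; lia.
Qed.

Lemma G_Qc m n mu j : Pc m n mu j.+1 -> Qc m n (G m j.+1 mu) j.
Proof.
case: mu => [|h t].
  by case=> _ [j2 ok _ _]; move: ok; rewrite /= addnS /= nth_nil.
case=> pl [j2 ok hb hs].
have pl' := pl; case/andP: pl' => /andP[st pos] /eqP sn.
have stt : sorted geq t by apply: path_sorted st.
have tle : forall x, x \in t -> x <= h.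
  move=> x hx; have := mem_le_head st; apply; by rewrite inE hx orbT.
have post : all (fun x => 0 < x) t by move: pos => /= /andP[].
have e2 : m + j = (m + j).-1.+1 by rewrite prednK //; lia.
move: ok hb hs; rewrite addnS /= {1}e2 /= => ok hb hs.
rewrite /G [j.+1.-1]/= [head _ _]/= [behead _]/= addnS [drop _ (h :: t)]/=.
set p := take (m + j) t; set dl := drop (m + j) t; set e := h - j.+1 - size dl.
have szt : m + j <= size t.
  have : nth 0 t (m + j).-1 != 0 by lia.
  move=> hn; have : (m + j).-1 < size t by apply: contraNT hn => hh; rewrite nth_default // leqNgt.
  lia.
have szp : size p = m + j by rewrite size_takel.
have szd : size dl = size t - (m + j) by rewrite size_drop.
have he : e = h - j.+1 - size dl by [].
have dle : forall x, x \in dl -> x.+1 <= j.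
  by move=> x /(drop_le stt) hx; lia.
have pge : forall y, y \in p -> j < y.
  by move=> y /(take_ge stt) hy; lia.
have sumt : sumn t = sumn p + sumn dl by rewrite -sumn_cat cat_take_drop.
have dpos : all (fun x => 0 < x) dl by apply/allP => x hx; apply: (allP post); apply: mem_drop hx.
split.
  rewrite /partition_of /is_partition; apply/andP; split; last first.
    have sc : forall x s, sumn (x :: s) = x + sumn s by [].
    rewrite sumn_cat sc sumn_cat sumn_succ sumn_nseq; apply/eqP; move: sn => /= sn.

    rewrite he; lia.
  apply/andP; split.
    apply: sorted_cat_geq; first exact: take_sorted.
      apply: sorted_cons_geq.
        apply: sorted_cat_geq; last by move=> y z /mapP[x _ ->]; rewrite mem_nseq => /andP[_ /eqP->].
          apply: (homo_sorted (e := geq)) => //; exact: drop_sorted.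
        exact: sorted_nseq1.
      move=> z; rewrite mem_cat => /orP[/mapP[x /dle hx ->]//|].
      by rewrite mem_nseq => /andP[_ /eqP->]; lia.
    move=> y z /pge hy; rewrite inE => /orP[/eqP->|]; first lia.
    rewrite mem_cat => /orP[/mapP[x /dle hx ->]|]; first lia.
    by rewrite mem_nseq => /andP[_ /eqP->]; lia.
  rewrite all_cat; apply/andP; split; first by apply/allP => y /pge; lia.
  apply/allP => y; rewrite inE mem_cat => /orP[/eqP->|/orP[/mapP[x _ ->]|]] //.
  by rewrite mem_nseq => /andP[_ /eqP->].
split; first lia.
- rewrite {1}e2 /= nth_cat szp ltn_predL ifT; last lia.
  by rewrite nth_take; last by rewrite ltn_predL; lia.
- by rewrite /= nth_cat szp ltnn subnn.
- rewrite drop_cat szp ltnNge leqnSn /= subSn // subnn /= drop0 mem_cat inE eqxx.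
  by rewrite orbT.
- rewrite size_cat /= size_cat size_map /= size_nseq szp {1}e2 /= nth_cat szp.
  rewrite ifT; last by rewrite {1}e2.
  rewrite nth_take; last lia.
  have : nth 0 t 0 <= h.
    case: (t) tle => [|x tt] //= hh; apply: hh; exact: mem_head.
  rewrite he; lia.
Qed.

Lemma gf m n l j : Qc m n l j -> G m j.+1 (F m j l) = l.
Proof.
case=> pl [j0 hgt hbj h1 hs].
have pl' := pl; case/andP: pl' => /andP[st pos] /eqP sn.
set p := take (m + j) l; set r := drop (m + j).+1 l.
set d := [seq x.-1 | x <- r & 1 < x]; set c := count (pred1 1) r.
have hp1 : part l (m + j) <= part l 1 by apply: part_anti => //; lia.
have hl : l = p ++ j :: r.
  rewrite -{1}(cat_take_drop (m + j) l) (drop_nth 0); last lia.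
  by move: hbj => /= ->.
have str : sorted geq r by apply: drop_sorted.
have posr : all (fun x => 0 < x) r by apply/allP => x hx; apply: (allP pos); apply: mem_drop hx.
have hr := decomp str posr; rewrite -/d -/c in hr.
have c1 : 0 < c by rewrite /c -has_count has_pred1.
have szp : size p = m + j by rewrite size_takel //; lia.
have szeq : size l = m + j + 1 + size d + c.
  by rewrite {1}hl size_cat /= hr size_cat size_map size_nseq szp; lia.
rewrite /F -/p -/r -/d /G [j.+1.-1]/= [head _ _]/= [behead _]/= addnS [drop _ (_ :: _)]/=.
rewrite -szp take_size_cat // drop_size_cat //.
have -> : (size l - m.+1 - j.+1 - size d).+1 = c by lia.
by rewrite [RHS]hl hr.
Qed.

Lemma fg m n mu j : Pc m n mu j.+1 -> F m j (G m j.+1 mu) = mu.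
Proof.
case: mu => [|h t].
  by case=> _ [j2 ok _ _]; move: ok; rewrite /= addnS /= nth_nil.
case=> pl [j2 ok hb hs].
have pl' := pl; case/andP: pl' => /andP[st pos] /eqP sn.
have post : all (fun x => 0 < x) t by move: pos => /= /andP[].
have e2 : m + j = (m + j).-1.+1 by rewrite prednK //; lia.
move: ok hb hs; rewrite addnS /= {1}e2 /= => ok hb hs.
rewrite /G [j.+1.-1]/= [head _ _]/= [behead _]/= addnS [drop _ (h :: t)]/=.
set p := take (m + j) t; set dl := drop (m + j) t; set e := h - j.+1 - size dl.
have szt : m + j <= size t.
  have : nth 0 t (m + j).-1 != 0 by lia.
  move=> hn; have : (m + j).-1 < size t by apply: contraNT hn => hh; rewrite nth_default // leqNgt.
  lia.
have szp : size p = m + j by rewrite size_takel.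
have szd : size dl = size t - (m + j) by rewrite size_drop.
have dpos : all (fun x => 0 < x) dl by apply/allP => x hx; apply: (allP post); apply: mem_drop hx.
rewrite /F size_cat /= size_cat size_map /= size_nseq szp.
rewrite -szp take_size_cat // drop_cat ltnNge leqnSn /= subSn // subnn /= drop0 -[1 :: nseq e 1]/(nseq e.+1 1) filt_succ //.
have -> : size p + (size dl + e.+1).+1 - m.+1 = h by rewrite /e; lia.
by rewrite /p /dl cat_take_drop.
Qed.

Theorem lemma4p3 (m n : nat) (hn : (1 <= n)%N) :
  exists (f g : seq nat -> seq nat),
    [/\ (forall l, Q3 m n l -> P3 m n (f l)),
        (forall mu, P3 m n mu -> Q3 m n (g mu)),
        (forall l, Q3 m n l -> g (f l) = l) &
        (forall mu, P3 m n mu -> f (g mu) = mu)].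
Proof.
exists (fun l => F m (durfee_j m l) l), (fun mu => G m (durfee_j m mu) mu).
have ex : forall mu, P3 m n mu -> exists j, durfee_j m mu = j.+1.
  move=> mu /P3_Pc [_ [j2 _ _ _]]; exists (durfee_j m mu).-1; lia.
split.
- by move=> l /Q3_Qc q; apply: Pc_P3 (F_Pc q).
- move=> mu hP; have q := P3_Pc hP; have [j ej] := ex _ hP.
  by rewrite ej in q *; apply: Qc_Q3 (G_Qc q).
- by move=> l /Q3_Qc q; rewrite (Pc_dj (F_Pc q)); apply: gf q.
- move=> mu hP; have q := P3_Pc hP; have [j ej] := ex _ hP.
  by rewrite ej in q *; rewrite (Qc_dj (G_Qc q)); apply: fg q.
Qed.
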